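(* Let $n\ge 1$. If $E\subseteq\mathbb{N}\times\mathbb{N}$ is a $\Sigma^0_{n+1}$ index equivalence relation, then $E$ is $\Pi^0_n$-graphable with diameter $2$.
   Context: $\varphi_e$ denotes the $e$-th partial computable function in a standard acceptable numbering. An equivalence relation $E$ on $\mathbb{N}$ is an index equivalence relation if whenever $\varphi_a=\varphi_{a'}$ and $\varphi_b=\varphi_{b'}$, we have $aEb\iff a'Eb'$. An equivalence relation $E$ on $X$ is $\Gamma$-graphable (for a pointclass $\Gamma$) if there is a simple undirected graph $G\subseteq X\times X$ in $\Gamma$ whose connectedness relation equals $E$; it is $\Gamma$-graphable with diameter $k$ if such a $G$ exists in which $k$ is the least integer such that any two $G$-connected points are joined by a path of length at most $k$. *)

(* Defs.v *)
From Stdlib Require Import Arith Lia Relations Cantor.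

Definition pair (x y : nat) : nat := Cantor.to_nat (x, y).
Definition p1 (z : nat) : nat := fst (Cantor.of_nat z).
Definition p2 (z : nat) : nat := snd (Cantor.of_nat z).

Inductive code : Type :=
| CZero : code
| CSucc : code
| CFst  : code
| CSnd  : code
| CPair : code -> code -> code
| CComp : code -> code -> code
| CRec  : code -> code -> code
| CMin  : code -> code.

Inductive eval : code -> nat -> nat -> Prop :=
| eZero x : eval CZero x 0
| eSucc x : eval CSucc x (S x)
| eFst x : eval CFst x (p1 x)
| eSnd x : eval CSnd x (p2 x)
| ePair f g x a b : eval f x a -> eval g x b -> eval (CPair f g) x (pair a b)
| eComp f g x y z : eval g x y -> eval f y z -> eval (CComp f g) x z
| eRec0 f g a v : eval f a v -> eval (CRec f g) (pair a 0) v
| eRecS f g a k r v : eval (CRec f g) (pair a k) r ->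
    eval g (pair a (pair k r)) v -> eval (CRec f g) (pair a (S k)) v
| eMin f x y : eval f (pair x y) 0 ->
    (forall z, z < y -> exists w, w <> 0 /\ eval f (pair x z) w) ->
    eval (CMin f) x y.

(* Goedel numbering: decoding of natural numbers into programs (surjective). *)
Fixpoint decode_fuel (fuel n : nat) : code :=
  match fuel with
  | 0 => CZero
  | S k =>
    match n with
    | 0 => CZero
    | S m =>
      let t := p1 m in let r := p2 m in
      match t with
      | 0 => CZero
      | 1 => CSucc
      | 2 => CFst
      | 3 => CSnd
      | 4 => CPair (decode_fuel k (p1 r)) (decode_fuel k (p2 r))
      | 5 => CComp (decode_fuel k (p1 r)) (decode_fuel k (p2 r))
      | 6 => CRec (decode_fuel k (p1 r)) (decode_fuel k (p2 r))
      | 7 => CMin (decode_fuel k r)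
      | _ => CZero
      end
    end
  end.

Definition decode (e : nat) : code := decode_fuel (S e) e.

Definition phi (e x v : nat) : Prop := eval (decode e) x v.

Definition same_fun (a b : nat) : Prop := forall x v, phi a x v <-> phi b x v.

Definition computable_set (A : nat -> Prop) : Prop :=
  exists e, forall x, (A x /\ phi e x 1) \/ (~ A x /\ phi e x 0).

Fixpoint Sigma0 (n : nat) (A : nat -> Prop) : Prop :=
  match n with
  | 0 => computable_set A
  | S k => exists B : nat -> Prop,
      Sigma0 k (fun z => ~ B z) /\ (forall x, A x <-> exists y, B (pair x y))
  end.

Definition Pi0 (n : nat) (A : nat -> Prop) : Prop := Sigma0 n (fun z => ~ A z).

Definition rel_code (R : nat -> nat -> Prop) : nat -> Prop := fun z => R (p1 z) (p2 z).
Definition Sigma0_rel (n : nat) (R : nat -> nat -> Prop) : Prop := Sigma0 n (rel_code R).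
Definition Pi0_rel (n : nat) (R : nat -> nat -> Prop) : Prop := Pi0 n (rel_code R).

Definition index_equiv (E : nat -> nat -> Prop) : Prop :=
  equivalence nat E /\
  forall a a' b b', same_fun a a' -> same_fun b b' -> (E a b <-> E a' b').

Definition simple_graph (G : nat -> nat -> Prop) : Prop :=
  (forall x, ~ G x x) /\ (forall x y, G x y -> G y x).

Definition connected (G : nat -> nat -> Prop) : nat -> nat -> Prop :=
  clos_refl_trans nat G.

Fixpoint reach_le (G : nat -> nat -> Prop) (k : nat) (x y : nat) : Prop :=
  match k with
  | 0 => x = y
  | S j => reach_le G j x y \/ exists z, reach_le G j x z /\ G z y
  end.

Definition bounded_by (G : nat -> nat -> Prop) (k : nat) : Prop :=
  forall x y, connected G x y -> reach_le G k x y.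

Definition has_diameter (G : nat -> nat -> Prop) (k : nat) : Prop :=
  bounded_by G k /\ forall j, j < k -> ~ bounded_by G j.

Definition Pi0_graphable_diam (n : nat) (E : nat -> nat -> Prop) (k : nat) : Prop :=
  exists G : nat -> nat -> Prop,
    simple_graph G /\ Pi0_rel n G /\
    (forall x y, connected G x y <-> E x y) /\ has_diameter G k.

(* Main.v *)
Require Import Defs.
From Stdlib Require Import Arith Lia Relations Cantor Classical.

Lemma p1_pair x y : p1 (pair x y) = x.
Proof. unfold p1, pair. now rewrite Cantor.cancel_of_to. Qed.
Lemma p2_pair x y : p2 (pair x y) = y.
Proof. unfold p2, pair. now rewrite Cantor.cancel_of_to. Qed.
Lemma pair_p x : pair (p1 x) (p2 x) = x.
Proof. unfold p1, p2, pair. rewrite <- surjective_pairing. apply Cantor.cancel_to_of. Qed.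
Lemma pair_inj a b c d : pair a b = pair c d -> a = c /\ b = d.
Proof. intro H. pose proof (f_equal p1 H). pose proof (f_equal p2 H).
  rewrite !p1_pair in *. rewrite !p2_pair in *. auto. Qed.
Lemma pair_ge x y : x <= pair x y /\ y <= pair x y.
Proof. unfold pair. pose proof (Cantor.to_nat_non_decreasing x y). lia. Qed.
Lemma p1_le z : p1 z <= z.
Proof. rewrite <- (pair_p z) at 2. apply pair_ge. Qed.
Lemma p2_le z : p2 z <= z.
Proof. rewrite <- (pair_p z) at 2. apply pair_ge. Qed.
Lemma pair00 : pair 0 0 = 0.
Proof. reflexivity. Qed.

Lemma fuel_ok : forall fuel fuel' n, n < fuel -> n < fuel' ->
  decode_fuel fuel n = decode_fuel fuel' n.
Proof.
  induction fuel as [|k IH]; intros fuel' n H1 H2; [lia|].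
  destruct fuel' as [|k']; [lia|].
  destruct n as [|m]; [reflexivity|].
  simpl.
  assert (Hr : p2 m <= m) by apply p2_le.
  assert (Ha : p1 (p2 m) <= m) by (pose proof (p1_le (p2 m)); lia).
  assert (Hb : p2 (p2 m) <= m) by (pose proof (p2_le (p2 m)); lia).
  destruct (p1 m) as [|[|[|[|[|[|[|[|t]]]]]]]]; try reflexivity;
  f_equal; apply IH; lia.
Qed.

Lemma decode_fuel_eq fuel n : n < fuel -> decode_fuel fuel n = decode n.
Proof. intro H. apply fuel_ok; unfold lt in *; lia. Qed.

Lemma decode_fuel_step k m : decode_fuel (S k) (S m) =
      let t := p1 m in let r := p2 m in
      match t with
      | 0 => CZero
      | 1 => CSucc
      | 2 => CFst
      | 3 => CSnd
      | 4 => CPair (decode_fuel k (p1 r)) (decode_fuel k (p2 r))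
      | 5 => CComp (decode_fuel k (p1 r)) (decode_fuel k (p2 r))
      | 6 => CRec (decode_fuel k (p1 r)) (decode_fuel k (p2 r))
      | 7 => CMin (decode_fuel k r)
      | _ => CZero
      end.
Proof. reflexivity. Qed.

Lemma decode_S t r : decode (S (pair t r)) =
  match t with
      | 0 => CZero
      | 1 => CSucc
      | 2 => CFst
      | 3 => CSnd
      | 4 => CPair (decode (p1 r)) (decode (p2 r))
      | 5 => CComp (decode (p1 r)) (decode (p2 r))
      | 6 => CRec (decode (p1 r)) (decode (p2 r))
      | 7 => CMin (decode r)
      | _ => CZero
      end.
Proof.
  unfold decode at 1. rewrite (decode_fuel_step (S (pair t r)) (pair t r)). rewrite p1_pair, p2_pair.
  pose proof (pair_ge t r). pose proof (p1_le r). pose proof (p2_le r).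
  destruct t as [|[|[|[|[|[|[|[|t]]]]]]]]; cbv zeta iota; try reflexivity;
  f_equal; apply decode_fuel_eq; lia.
Qed.

Fixpoint enc (c : code) : nat :=
  match c with
  | CZero => 0
  | CSucc => S (pair 1 0)
  | CFst => S (pair 2 0)
  | CSnd => S (pair 3 0)
  | CPair f g => S (pair 4 (pair (enc f) (enc g)))
  | CComp f g => S (pair 5 (pair (enc f) (enc g)))
  | CRec f g => S (pair 6 (pair (enc f) (enc g)))
  | CMin f => S (pair 7 (enc f))
  end.

Lemma decode_enc c : decode (enc c) = c.
Proof.
  induction c; simpl enc; try reflexivity; rewrite decode_S; try rewrite p1_pair, p2_pair; congruence.
Qed.

Lemma phi_enc c x v : phi (enc c) x v <-> eval c x v.
Proof. unfold phi. now rewrite decode_enc. Qed.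

Definition comp (f : nat -> nat) := exists c, forall x, eval c x (f x).

Lemma ev_conv c x v w : eval c x v -> v = w -> eval c x w.
Proof. intros H ->; exact H. Qed.

Lemma comp_ext f g : comp f -> (forall x, f x = g x) -> comp g.
Proof. intros [c Hc] H; exists c; intro x; rewrite <- H; apply Hc. Qed.

Lemma comp_p1 : comp p1. Proof. exists CFst; constructor. Qed.
Lemma comp_p2 : comp p2. Proof. exists CSnd; constructor. Qed.
Lemma comp_S : comp S. Proof. exists CSucc; constructor. Qed.
Lemma comp_pair f g : comp f -> comp g -> comp (fun x => pair (f x) (g x)).
Proof. intros [c Hc] [d Hd]; exists (CPair c d); intro; now constructor. Qed.
Lemma comp_o f g : comp f -> comp g -> comp (fun x => f (g x)).
Proof. intros [c Hc] [d Hd]; exists (CComp c d); intro; econstructor; eauto. Qed.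
Lemma comp_id : comp (fun x => x).
Proof. apply (comp_ext (fun x => pair (p1 x) (p2 x))). apply comp_pair; [apply comp_p1|apply comp_p2].
  apply pair_p. Qed.
Lemma comp_const k : comp (fun _ => k).
Proof. induction k. exists CZero; constructor.
  apply (comp_o S (fun _ => k)); [apply comp_S|exact IHk]. Qed.

Lemma comp_rec fb gs : comp fb -> comp (fun z => gs (p1 z) (p1 (p2 z)) (p2 (p2 z))) ->
  comp (fun z => nat_rec (fun _ => nat) (fb (p1 z)) (fun k r => gs (p1 z) k r) (p2 z)).
Proof.
  intros [F HF] [G HG]. exists (CRec F G). intro z.
  rewrite <- (pair_p z) at 1. generalize (p1 z) (p2 z). clear z. intros a k.
  induction k; simpl.
  - constructor. apply HF.
  - eapply eRecS. exact IHk. eapply ev_conv. apply HG. rewrite !p2_pair, !p1_pair. reflexivity.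
Qed.

Lemma comp_pred : comp pred.
Proof.
  pose (h := fun z => nat_rec (fun _ => nat) ((fun _ => 0) (p1 z)) (fun k r => (fun a k r => k) (p1 z) k r) (p2 z)).
  apply (comp_ext (fun x => h (pair x x))).
  apply (comp_o h (fun x => pair x x)); [|apply comp_pair; apply comp_id]. unfold h.
  apply (comp_rec (fun _ => 0) (fun a k r => k)). apply comp_const. simpl. apply comp_o; [apply comp_p1|apply comp_p2].
  intro x. unfold h. rewrite p2_pair. destruct x; reflexivity.
Qed.

Lemma comp_sub : comp (fun z => p1 z - p2 z).
Proof.
  apply (comp_ext (fun z => nat_rec (fun _ => nat) ((fun a => a) (p1 z)) (fun k r => (fun a k r => pred r) (p1 z) k r) (p2 z))).
  apply (comp_rec (fun a => a) (fun a k r => pred r)). apply comp_id. simpl. apply (comp_o pred (fun z => p2 (p2 z))); [apply comp_pred|]. apply comp_o; apply comp_p2.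
  intro z. simpl. generalize (p1 z) (p2 z). intros a k. induction k; simpl; lia.
Qed.

Lemma comp_isz : comp (fun x => if Nat.eqb x 0 then 1 else 0).
Proof.
  pose (h := fun z => nat_rec (fun _ => nat) ((fun _ => 1) (p1 z)) (fun k r => (fun a k r => 0) (p1 z) k r) (p2 z)).
  apply (comp_ext (fun x => h (pair x x))).
  apply (comp_o h (fun x => pair x x)); [|apply comp_pair; apply comp_id]. unfold h.
  apply (comp_rec (fun _ => 1) (fun a k r => 0)). apply comp_const. apply comp_const.
  intro x. unfold h. rewrite p2_pair. destruct x; reflexivity.
Qed.

Lemma pair_zero a b : pair a b = 0 <-> a = 0 /\ b = 0.
Proof. split. intro H. pose proof (pair_ge a b). lia. intros [-> ->]. reflexivity. Qed.

Lemma comp_eqf f g : comp f -> comp g -> comp (fun x => if Nat.eqb (f x) (g x) then 1 else 0).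
Proof.
  intros Hf Hg.
  apply (comp_ext (fun x => (fun y => if Nat.eqb y 0 then 1 else 0) (pair (f x - g x) (g x - f x)))).
  apply (comp_o (fun y => if Nat.eqb y 0 then 1 else 0) (fun x => pair (f x - g x) (g x - f x))). apply comp_isz.
  apply (comp_pair (fun x => f x - g x) (fun x => g x - f x)).
  eapply comp_ext. apply (comp_o (fun z => p1 z - p2 z) (fun x => pair (f x) (g x))). apply comp_sub. now apply comp_pair.
  intro; simpl; now rewrite p1_pair, p2_pair.
  eapply comp_ext. apply (comp_o (fun z => p1 z - p2 z) (fun x => pair (g x) (f x))). apply comp_sub. now apply comp_pair.
  intro; simpl; now rewrite p1_pair, p2_pair.
  intro x. simpl. destruct (Nat.eqb (pair (f x - g x) (g x - f x)) 0) eqn:E1;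
  destruct (Nat.eqb (f x) (g x)) eqn:E2; auto.
  apply Nat.eqb_eq in E1. apply pair_zero in E1. apply Nat.eqb_neq in E2. lia.
  apply Nat.eqb_neq in E1. apply Nat.eqb_eq in E2. rewrite E2, Nat.sub_diag in E1. now elim E1.
Qed.

(* boolean combination codes: f x, g x in {0,1} *)
Lemma comp_or2 : comp (fun z => nat_rec (fun _ => nat) ((fun a => a) (p1 z)) (fun k r => (fun a k r => 1) (p1 z) k r) (p2 z)).
Proof. apply (comp_rec (fun a => a) (fun a k r => 1)). apply comp_id. apply comp_const. Qed.
Lemma comp_and2 : comp (fun z => nat_rec (fun _ => nat) ((fun a => 0) (p1 z)) (fun k r => (fun a k r => a) (p1 z) k r) (p2 z)).
Proof. apply (comp_rec (fun a => 0) (fun a k r => a)). apply comp_const. apply comp_p1. Qed.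

Lemma Sigma0_ext n A A' : (forall x, A x <-> A' x) -> Sigma0 n A -> Sigma0 n A'.
Proof.
  destruct n as [|k]; simpl.
  - intros H [e He]; exists e; intro x; rewrite <- H; apply He.
  - intros H [B [HB HA]]; exists B; split; auto; intro x; rewrite <- H; apply HA.
Qed.

Lemma Sigma0_pre n : forall A f, comp f -> Sigma0 n A -> Sigma0 n (fun x => A (f x)).
Proof.
  induction n as [|k IH]; simpl.
  - intros A f [c Hc] [e He]. exists (enc (CComp (decode e) c)). intro x.
    destruct (He (f x)) as [[Ha Hp]|[Ha Hp]]; [left|right]; split; auto;
    apply phi_enc; econstructor; eauto.
  - intros A f Hf [B [HB HA]].
    exists (fun z => B (pair (f (p1 z)) (p2 z))). split.
    + apply (IH (fun z => ~ B z) (fun z => pair (f (p1 z)) (p2 z))); auto.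
      apply (comp_pair (fun z => f (p1 z)) p2). apply comp_o; auto; apply comp_p1. apply comp_p2.
    + intro x. rewrite HA. split; intros [y Hy]; exists y; rewrite ?p1_pair, ?p2_pair in *; auto.
Qed.

Lemma cs_comb (h : nat -> nat) C A A' : comp h -> computable_set A -> computable_set A' ->
  (forall x v1 v2, ((A x /\ v1 = 1) \/ (~A x /\ v1 = 0)) -> ((A' x /\ v2 = 1) \/ (~A' x /\ v2 = 0)) ->
     (C x /\ h (pair v1 v2) = 1) \/ (~C x /\ h (pair v1 v2) = 0)) -> computable_set C.
Proof.
  intros [c Hc] [e1 H1] [e2 H2] H.
  exists (enc (CComp c (CPair (decode e1) (decode e2)))). intro x.
  destruct (H1 x) as [[Ha Hp]|[Ha Hp]]; destruct (H2 x) as [[Hb Hq]|[Hb Hq]];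
  [ destruct (H x 1 1) as [[Hc1 Hv]|[Hc1 Hv]]
  | destruct (H x 1 0) as [[Hc1 Hv]|[Hc1 Hv]]
  | destruct (H x 0 1) as [[Hc1 Hv]|[Hc1 Hv]]
  | destruct (H x 0 0) as [[Hc1 Hv]|[Hc1 Hv]] ]; auto;
  [left|right|left|right|left|right|left|right]; split; auto;
  apply phi_enc; (eapply eComp; [ apply ePair; [exact Hp | exact Hq] | exact (ev_conv _ _ _ _ (Hc _) Hv) ]).
Qed.

Lemma cs_un (h : nat -> nat) C A : comp h -> computable_set A ->
  (forall x v1, ((A x /\ v1 = 1) \/ (~A x /\ v1 = 0)) ->
     (C x /\ h v1 = 1) \/ (~C x /\ h v1 = 0)) -> computable_set C.
Proof.
  intros [c Hc] [e1 H1] H.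
  exists (enc (CComp c (decode e1))). intro x.
  destruct (H1 x) as [[Ha Hp]|[Ha Hp]];
  [ destruct (H x 1) as [[Hc1 Hv]|[Hc1 Hv]]
  | destruct (H x 0) as [[Hc1 Hv]|[Hc1 Hv]] ]; auto;
  [left|right|left|right]; split; auto;
  apply phi_enc; (eapply eComp; [ exact Hp | exact (ev_conv _ _ _ _ (Hc _) Hv) ]).
Qed.

Lemma cs_not A : computable_set A -> computable_set (fun x => ~ A x).
Proof.
  intro H. apply (cs_un _ _ _ comp_isz H). intros x v [[Ha ->]|[Ha ->]]; simpl; auto.
Qed.

Lemma Sigma0_dec n : forall A, computable_set A -> Sigma0 n A /\ Sigma0 n (fun x => ~ A x).
Proof.
  induction n as [|k IH]; intros A H.
  - split; simpl; auto. now apply cs_not.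
  - destruct (IH A H) as [H1 H2]. split; simpl.
    + exists (fun z => A (p1 z)). split.
      * apply (Sigma0_pre k (fun x => ~ A x) p1 comp_p1 H2).
      * intro x; split; [intro; exists 0; now rewrite p1_pair|intros [y Hy]; now rewrite p1_pair in Hy].
    + exists (fun z => ~ A (p1 z)). split.
      * apply (Sigma0_ext k (fun z => A (p1 z))). intro; split; tauto.
        apply (Sigma0_pre k A p1 comp_p1 H1).
      * intro x; split; [intro; exists 0; now rewrite p1_pair|intros [y Hy]; now rewrite p1_pair in Hy].
Qed.

Lemma Sigma0_orand n : (forall A A', Sigma0 n A -> Sigma0 n A' -> Sigma0 n (fun x => A x \/ A' x)) /\
                       (forall A A', Sigma0 n A -> Sigma0 n A' -> Sigma0 n (fun x => A x /\ A' x)).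
Proof.
  induction n as [|k [IHo IHa]]; split; simpl.
  - intros A A' H1 H2. apply (cs_comb _ _ _ _ comp_or2 H1 H2).
    intros x v1 v2 [[Ha ->]|[Ha ->]] [[Hb ->]|[Hb ->]]; rewrite ?p1_pair, ?p2_pair; simpl; tauto.
  - intros A A' H1 H2. apply (cs_comb _ _ _ _ comp_and2 H1 H2).
    intros x v1 v2 [[Ha ->]|[Ha ->]] [[Hb ->]|[Hb ->]]; rewrite ?p1_pair, ?p2_pair; simpl; tauto.
  - intros A A' [B [HB HA]] [B' [HB' HA']].
    exists (fun z => B z \/ B' z). split.
    + apply (Sigma0_ext k (fun z => ~ B z /\ ~ B' z)). intro; tauto. now apply IHa.
    + intro x. rewrite HA, HA'. split.
      * intros [[y Hy]|[y Hy]]; exists y; auto.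
      * intros [y [Hy|Hy]]; [left|right]; exists y; auto.
  - intros A A' [B [HB HA]] [B' [HB' HA']].
    exists (fun z => B (pair (p1 z) (p1 (p2 z))) /\ B' (pair (p1 z) (p2 (p2 z)))). split.
    + apply (Sigma0_ext k (fun z => ~ B (pair (p1 z) (p1 (p2 z))) \/ ~ B' (pair (p1 z) (p2 (p2 z))))).
      intro; tauto.
      apply IHo.
      all: cycle 0.
      * apply (Sigma0_pre k (fun z => ~ B z) (fun z => pair (p1 z) (p1 (p2 z)))); auto.
        apply (comp_pair p1 (fun z => p1 (p2 z))). apply comp_p1. apply comp_o; [apply comp_p1|apply comp_p2].
      * apply (Sigma0_pre k (fun z => ~ B' z) (fun z => pair (p1 z) (p2 (p2 z)))); auto.
        apply (comp_pair p1 (fun z => p2 (p2 z))). apply comp_p1. apply comp_o; [apply comp_p2|apply comp_p2].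
    + intro x. rewrite HA, HA'. split.
      * intros [[y Hy] [y' Hy']]. exists (pair y y'). repeat rewrite p1_pair; repeat rewrite p2_pair; repeat rewrite p1_pair. auto.
      * intros [y [Hy Hy']]. rewrite !p1_pair in *. split; eexists; eauto.
Qed.

Definition PREP := CPair (CPair CFst CSnd) CZero.
Definition Cst := enc PREP.
Definition pad e k := S (pair 5 (pair (S (pair 6 (pair e k))) Cst)).
Definition pe y := p1 (p2 (pred (p1 (p2 (pred y))))).
Definition pk y := p2 (p2 (pred (p1 (p2 (pred y))))).

Lemma pe_pad e k : pe (pad e k) = e.
Proof. unfold pe, pad. rewrite Nat.pred_succ, p2_pair, p1_pair, Nat.pred_succ, p2_pair, p1_pair. reflexivity. Qed.
Lemma pk_pad e k : pk (pad e k) = k.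
Proof. unfold pk, pad. rewrite Nat.pred_succ, p2_pair, p1_pair, Nat.pred_succ, p2_pair, p2_pair. reflexivity. Qed.

Lemma decode_pad e k : decode (pad e k) = CComp (CRec (decode e) (decode k)) PREP.
Proof. unfold pad. rewrite decode_S, p1_pair, p2_pair, decode_S, p1_pair, p2_pair.
  unfold Cst. now rewrite decode_enc. Qed.

Lemma rec0_inv F G z v : eval (CRec F G) z v -> forall a, z = pair a 0 -> eval F a v.
Proof.
  intros H; inversion H; subst; intros a' Ha.
  - apply pair_inj in Ha. destruct Ha as [-> _]. assumption.
  - apply pair_inj in Ha. destruct Ha as [_ Hk]. discriminate.
Qed.

Lemma prep_inv x y : eval PREP x y -> y = pair x 0.
Proof.
  unfold PREP. intro H. inversion H; subst.
  match goal with H1 : eval (CPair CFst CSnd) _ _ |- _ => inversion H1; subst; clear H1 end.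
  repeat match goal with
  | H1 : eval CFst _ _ |- _ => inversion H1; subst; clear H1
  | H1 : eval CSnd _ _ |- _ => inversion H1; subst; clear H1
  | H1 : eval CZero _ _ |- _ => inversion H1; subst; clear H1 end.
  now rewrite pair_p.
Qed.

Lemma pad_fun e k : same_fun e (pad e k).
Proof.
  intros x v. unfold phi. rewrite decode_pad. split.
  - intro H. eapply eComp. { eapply ev_conv. unfold PREP. constructor. constructor. constructor. constructor.
      constructor. now rewrite pair_p. }
    constructor. exact H.
  - intro H. inversion H; subst.
    match goal with H1 : eval PREP _ _ |- _ => apply prep_inv in H1; subst end.
    eapply rec0_inv; eauto.
Qed.

Lemma same_fun_refl a : same_fun a a.
Proof. intros x v; tauto. Qed.

Lemma comp_pad f g : comp f -> comp g -> comp (fun z => pad (f z) (g z)).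
Proof.
  intros Hf Hg. unfold pad.
  apply (comp_o S (fun z => pair 5 (pair (S (pair 6 (pair (f z) (g z)))) Cst))). apply comp_S.
  apply (comp_pair (fun _ => 5) (fun z => pair (S (pair 6 (pair (f z) (g z)))) Cst)). apply comp_const.
  apply (comp_pair (fun z => S (pair 6 (pair (f z) (g z)))) (fun _ => Cst)). 2: apply comp_const.
  apply (comp_o S (fun z => pair 6 (pair (f z) (g z)))). apply comp_S.
  apply (comp_pair (fun _ => 6) (fun z => pair (f z) (g z))). apply comp_const.
  now apply comp_pair.
Qed.

Ltac solve_comp :=
  lazymatch goal with
  | |- comp (fun z => z) => apply comp_id
  | |- comp (fun z => pair (@?f z) (@?g z)) => apply (comp_pair f g); solve_comp
  | |- comp (fun z => S (@?f z)) => apply (comp_o S f); [apply comp_S | solve_comp]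
  | |- comp (fun z => p1 (@?f z)) => apply (comp_o p1 f); [apply comp_p1 | solve_comp]
  | |- comp (fun z => p2 (@?f z)) => apply (comp_o p2 f); [apply comp_p2 | solve_comp]
  | |- comp (fun z => pred (@?f z)) => apply (comp_o pred f); [apply comp_pred | solve_comp]
  | |- comp (fun z => pe (@?f z)) => apply (comp_o pe f); [unfold pe; solve_comp | solve_comp]
  | |- comp (fun z => pk (@?f z)) => apply (comp_o pk f); [unfold pk; solve_comp | solve_comp]
  | |- comp (fun z => pad (@?f z) (@?g z)) =>
      apply (comp_pad f g); solve_comp
  | |- comp (fun z => ?c) => apply comp_const
  end.

Lemma test_comp : comp (fun z => pair (pad (pe (p2 z)) (pk (p2 z))) (pe (p2 z))).
Proof. solve_comp. Qed.

Definition HH (B : nat -> Prop) x y := pad (pe y) (pk y) = y /\ pe y = x /\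
  B (pair (pair x (p1 (pk y))) (p2 (pk y))).
Definition KK (B : nat -> Prop) x y := pad (pe x) (pk x) = x /\ p1 (pk x) = y /\
  B (pair (pair (pe x) y) (p2 (pk x))).
Definition Gr B x y := x <> y /\ (HH B x y \/ HH B y x \/ KK B x y \/ KK B y x).

Lemma cs_eq F G : comp F -> comp G -> computable_set (fun z => F z = G z).
Proof.
  intros HF HG. destruct (comp_eqf F G HF HG) as [c Hc]. exists (enc c). intro x.
  specialize (Hc x). apply phi_enc in Hc.
  destruct (Nat.eqb (F x) (G x)) eqn:E.
  - left. split; auto. now apply Nat.eqb_eq.
  - right. split; auto. now apply Nat.eqb_neq.
Qed.

Lemma L_neg n B F G h : Sigma0 n (fun z => ~ B z) -> comp F -> comp G -> comp h ->
  Sigma0 n (fun z => ~ (F z = G z /\ B (h z))).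
Proof.
  intros HB HF HG Hh.
  apply (Sigma0_ext n (fun z => ~ F z = G z \/ ~ B (h z))).
  { intro z. destruct (Nat.eq_dec (F z) (G z)); tauto. }
  apply (proj1 (Sigma0_orand n)).
  - apply (proj2 (Sigma0_dec n _ (cs_eq F G HF HG))).
  - apply (Sigma0_pre n (fun z => ~ B z) h Hh HB).
Qed.

Lemma swap_pre n A : Sigma0 n (fun z => A (p1 z) (p2 z)) -> Sigma0 n (fun z => A (p2 z) (p1 z)).
Proof.
  intro H. apply (Sigma0_ext n (fun z => A (p1 (pair (p2 z) (p1 z))) (p2 (pair (p2 z) (p1 z))))).
  { intro; now rewrite p1_pair, p2_pair. }
  apply (Sigma0_pre n (fun z => A (p1 z) (p2 z)) (fun z => pair (p2 z) (p1 z))); auto. solve_comp.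
Qed.

Lemma HH_S n B : Sigma0 n (fun z => ~ B z) -> Sigma0 n (fun z => ~ HH B (p1 z) (p2 z)).
Proof.
  intro HB.
  apply (Sigma0_ext n (fun z => ~ (pair (pad (pe (p2 z)) (pk (p2 z))) (pe (p2 z)) = pair (p2 z) (p1 z) /\
     B (pair (pair (p1 z) (p1 (pk (p2 z)))) (p2 (pk (p2 z))))))).
  { intro z. unfold HH. split; intros H1 H2; apply H1.
    - destruct H2 as [H2 [H3 H4]]. rewrite H2, H3. auto.
    - destruct H2 as [H2 H4]. apply pair_inj in H2. tauto. }
  apply L_neg; auto; solve_comp.
Qed.

Lemma KK_S n B : Sigma0 n (fun z => ~ B z) -> Sigma0 n (fun z => ~ KK B (p1 z) (p2 z)).
Proof.
  intro HB.
  apply (Sigma0_ext n (fun z => ~ (pair (pad (pe (p1 z)) (pk (p1 z))) (p1 (pk (p1 z))) = pair (p1 z) (p2 z) /\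
     B (pair (pair (pe (p1 z)) (p2 z)) (p2 (pk (p1 z))))))).
  { intro z. unfold KK. split; intros H1 H2; apply H1.
    - destruct H2 as [H2 [H3 H4]]. rewrite H2, H3. auto.
    - destruct H2 as [H2 H4]. apply pair_inj in H2. destruct H2 as [H2 H3]. rewrite <- H3. tauto. }
  apply L_neg; auto; solve_comp.
Qed.

Lemma Gr_Pi n B : Sigma0 n (fun z => ~ B z) -> Pi0_rel n (Gr B).
Proof.
  intro HB. unfold Pi0_rel, Pi0, rel_code.
  apply (Sigma0_ext n (fun z => p1 z = p2 z \/ ((~ HH B (p1 z) (p2 z) /\ ~ HH B (p2 z) (p1 z)) /\
      (~ KK B (p1 z) (p2 z) /\ ~ KK B (p2 z) (p1 z))))).
  { intro z. unfold Gr. destruct (Nat.eq_dec (p1 z) (p2 z)); tauto. }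
  destruct (Sigma0_orand n) as [Ho Ha].
  apply Ho. apply (proj1 (Sigma0_dec n _ (cs_eq p1 p2 comp_p1 comp_p2))).
  apply Ha; apply Ha.
  - now apply HH_S.
  - apply (swap_pre n (fun x y => ~ HH B x y)). now apply HH_S.
  - now apply KK_S.
  - apply (swap_pre n (fun x y => ~ KK B x y)). now apply KK_S.
Qed.


Lemma HH_pad B x b c : B (pair (pair x b) c) -> HH B x (pad x (pair b c)).
Proof. intro H. unfold HH. rewrite pe_pad, pk_pad, p1_pair, p2_pair. auto. Qed.
Lemma KK_pad B a y c : B (pair (pair a y) c) -> KK B (pad a (pair y c)) y.
Proof. intro H. unfold KK. rewrite pe_pad, pk_pad, p1_pair, p2_pair. auto. Qed.

Lemma pad_neq0 e k : pad e k <> 0.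
Proof. unfold pad. discriminate. Qed.

Lemma reach_conn G k x y : reach_le G k x y -> connected G x y.
Proof.
  revert y; induction k; simpl; intros y H.
  - subst. apply rt_refl.
  - destruct H as [H|[z [H1 H2]]]; auto. eapply rt_trans; [apply IHk; eauto|]. now apply rt_step.
Qed.



Lemma EB (E : nat -> nat -> Prop) (B : nat -> Prop) (HA : forall x, rel_code E x <-> exists y, B (pair x y)) (Heq : equivalence nat E) (Hidx : forall a a' b b', same_fun a a' -> same_fun b b' -> (E a b <-> E a' b')) a b : E a b <-> exists c, B (pair (pair a b) c).
Proof. rewrite <- HA. unfold rel_code. now rewrite p1_pair, p2_pair. Qed.

Lemma HH_E (E : nat -> nat -> Prop) (B : nat -> Prop) (HA : forall x, rel_code E x <-> exists y, B (pair x y)) (Heq : equivalence nat E) (Hidx : forall a a' b b', same_fun a a' -> same_fun b b' -> (E a b <-> E a' b')) x y : HH B x y -> E x y.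
Proof.
  intros [H1 [H2 _]]. rewrite <- H1, H2.
  apply (Hidx x x x (pad x (pk y))); [apply same_fun_refl|apply pad_fun|]. apply (equiv_refl _ _ Heq).
Qed.

Lemma KK_E (E : nat -> nat -> Prop) (B : nat -> Prop) (HA : forall x, rel_code E x <-> exists y, B (pair x y)) (Heq : equivalence nat E) (Hidx : forall a a' b b', same_fun a a' -> same_fun b b' -> (E a b <-> E a' b')) x y : KK B x y -> E x y.
Proof.
  intros [H1 [H2 H3]]. rewrite <- H1.
  apply (Hidx (pe x) (pad (pe x) (pk x)) y y); [apply pad_fun|apply same_fun_refl|].
  apply (EB E B HA Heq Hidx). eauto.
Qed.

Lemma Gr_E (E : nat -> nat -> Prop) (B : nat -> Prop) (HA : forall x, rel_code E x <-> exists y, B (pair x y)) (Heq : equivalence nat E) (Hidx : forall a a' b b', same_fun a a' -> same_fun b b' -> (E a b <-> E a' b')) x y : Gr B x y -> E x y.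
Proof.
  intros [_ [H|[H|[H|H]]]].
  - now apply (HH_E E B HA Heq Hidx).
  - apply (equiv_sym _ _ Heq). now apply (HH_E E B HA Heq Hidx).
  - now apply (KK_E E B HA Heq Hidx).
  - apply (equiv_sym _ _ Heq). now apply (KK_E E B HA Heq Hidx).
Qed.

Lemma conn_E (E : nat -> nat -> Prop) (B : nat -> Prop) (HA : forall x, rel_code E x <-> exists y, B (pair x y)) (Heq : equivalence nat E) (Hidx : forall a a' b b', same_fun a a' -> same_fun b b' -> (E a b <-> E a' b')) x y : connected (Gr B) x y -> E x y.
Proof.
  induction 1.
  - now apply (Gr_E E B HA Heq Hidx).
  - apply (equiv_refl _ _ Heq).
  - eapply (equiv_trans _ _ Heq); eauto.
Qed.

Lemma E_reach (E : nat -> nat -> Prop) (B : nat -> Prop) (HA : forall x, rel_code E x <-> exists y, B (pair x y)) (Heq : equivalence nat E) (Hidx : forall a a' b b', same_fun a a' -> same_fun b b' -> (E a b <-> E a' b')) a b : E a b -> reach_le (Gr B) 2 a b.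
Proof.
  intro H. apply (EB E B HA Heq Hidx) in H. destruct H as [c Hc].
  pose proof (HH_pad _ _ _ _ Hc) as H1.
  pose proof (KK_pad _ _ _ _ Hc) as H2.
  revert H1 H2. generalize (pad a (pair b c)). intros z H1 H2.
  destruct (Nat.eq_dec a b) as [<-|Hab].
  { simpl. left. left. reflexivity. }
  destruct (Nat.eq_dec z a) as [Hza|Hza].
  { simpl. left. right. exists a. split; [reflexivity|]. split; auto. rewrite Hza in H2. tauto. }
  destruct (Nat.eq_dec z b) as [Hzb|Hzb].
  { simpl. left. right. exists a. split; [reflexivity|]. split; auto. rewrite Hzb in H1. tauto. }
  simpl. right. exists z. split.
  - right. exists a. split; [reflexivity|]. split; [congruence|tauto].
  - split; [exact Hzb|tauto].
Qed.


Theorem theorem5p1 (n : nat) (E : nat -> nat -> Prop) :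
  1 <= n -> Sigma0_rel (S n) E -> index_equiv E -> Pi0_graphable_diam n E 2.
Proof.
  intros _ HS [Heq Hidx]. destruct HS as [B [HB HA]].
  exists (Gr B). split; [|split; [|split]].
  - split.
    + intros x [H _]. now apply H.
    + intros x y [H1 H2]. split; [congruence|tauto].
  - now apply Gr_Pi.
  - intros x y. split.
    + apply (conn_E E B HA Heq Hidx).
    + intro H. eapply reach_conn. apply (E_reach E B HA Heq Hidx). exact H.
  - split.
    + intros x y H. apply (E_reach E B HA Heq Hidx). now apply (conn_E E B HA Heq Hidx).
    +
      destruct (proj1 (EB E B HA Heq Hidx 0 0) (equiv_refl _ _ Heq 0)) as [c1 Hc1].
      remember (pad 0 (pair 0 c1)) as z1 eqn:Ez1.
      destruct (proj1 (EB E B HA Heq Hidx z1 z1) (equiv_refl _ _ Heq z1)) as [c2 Hc2].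
      remember (pad z1 (pair z1 c2)) as w eqn:Ew.
      assert (Hz1 : z1 <> 0) by (rewrite Ez1; apply pad_neq0).
      assert (Hw : w <> 0) by (rewrite Ew; apply pad_neq0).
      assert (Hc : connected (Gr B) 0 w).
      { eapply reach_conn. apply (E_reach E B HA Heq Hidx).
        apply (Hidx 0 0 0 w); [apply same_fun_refl| |apply (equiv_refl _ _ Heq)].
        intros x v. rewrite (pad_fun 0 (pair 0 c1) x v), <- Ez1, Ew. apply (pad_fun z1 (pair z1 c2) x v). }
      assert (HG : ~ Gr B 0 w).
      { intros [_ [H|[H|[H|H]]]].
        - destruct H as [_ [H _]]. rewrite Ew, pe_pad in H. auto.
        - destruct H as [H _]. now apply (pad_neq0 (pe 0) (pk 0)).
        - destruct H as [H _]. now apply (pad_neq0 (pe 0) (pk 0)).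
        - destruct H as [_ [H _]]. rewrite Ew, pk_pad, p1_pair in H. auto. }
      intros j Hj Hb. specialize (Hb 0 w Hc).
      destruct j as [|[|j]]; [|simpl in Hb|lia].
      * simpl in Hb. auto.
      * destruct Hb as [Hb|[z [Hz Hg]]]; [auto|]. subst z. auto.
Qed.
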